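(* Let $(A, b, c)$ be a $k$-level LP instance. Let $p \le k-1$ and write $A_{pi} = \begin{pmatrix} A'_{pi} \\ A''_{pi}\end{pmatrix}$, $b_p = \begin{pmatrix} b'_p \\ b''_p\end{pmatrix}$ for each $i = 1,\ldots,k$, such that $A'_{pi} = 0$ for all $i = p+1,\ldots,k$. Define a $k$-level LP instance $(\hat{A}, \hat{b}, \hat{c})$ by $\hat{c} = c$, $\hat{A}_{li} = A_{li}$, $\hat{b}_l = b_l$ for all $l \ne p, p+1$ and all $i$, and $\hat{A}_{pi} = A''_{pi}$, $\hat{b}_p = b''_p$, $\hat{A}_{p+1\,i} = \begin{pmatrix} A'_{pi} \\ A_{p+1\,i}\end{pmatrix}$, $\hat{b}_{p+1} = \begin{pmatrix} b'_p \\ b_{p+1}\end{pmatrix}$ for $i = 1,\ldots,k$. Then the feasible set of the instance $(A,b,c)$ equals the feasible set of the instance $(\hat{A}, \hat{b}, \hat{c})$.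
   Context: A $k$-level LP instance $(A,b,c)$ has data $A_{li} \in \mathbb{Q}^{m_l \times n_i}$, $b_l \in \mathbb{Q}^{m_l}$, $c_{li} \in \mathbb{Q}^{n_i}$. Player $l$ chooses $x_l \in \mathbb{R}^{n_l}$ after players $1,\ldots,l-1$. The $l$-th player's problem, given $x_1,\ldots,x_{l-1}$, is $\inf_{x_l,\ldots,x_k}\{\sum_{i=l}^k c_{li}^\top x_i : \sum_{i=1}^k A_{li}x_i \ge b_l,\ (x_{l+1},\ldots,x_k) \in \mathcal{S}(\text{problem of player } l+1 \text{ given } x_1,\ldots,x_l)\}$, and the $k$-th player's problem is $\inf_{x_k}\{c_{kk}^\top x_k : \sum_{i=1}^k A_{ki}x_i \ge b_k\}$. The instance is identified with the first player's problem; its feasible set is the set of feasible $(x_1,\ldots,x_k)$ of the first player's problem. $\mathcal{S}(\cdot)$ denotes the optimal solution set (optimistic setting). *)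

(* Defs.v *)
From HB Require Import structures.
From mathcomp Require Import all_boot all_order all_algebra.
From mathcomp Require Import reals.
Set Implicit Arguments. Unset Strict Implicit. Unset Printing Implicit Defensive.
Import Order.TTheory GRing.Theory Num.Theory.
Local Open Scope ring_scope.

(* Levels and variable blocks are indexed by
   'I_k (0-based: level l of the paper is level l-1 here).  The variable block
   dimensions n are a parameter of the type, so that an instance and its
   transformed version share the same variables.  c l i is only used for
   l <= i. *)
Record klp (k : nat) (n : 'I_k -> nat) := KLP {
  m : 'I_k -> nat;
  A : forall l i : 'I_k, 'M[rat]_(m l, n i);
  b : forall l : 'I_k, 'cV[rat]_(m l);
  c : forall l i : 'I_k, 'cV[rat]_(n i)
}.
Arguments klp : clear implicits.

Definition vars (R : realType) {k : nat} (n : 'I_k -> nat) :=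
  forall i : 'I_k, 'cV[R]_(n i).

Section KLevel.
Variables (R : realType) (k : nat) (n : 'I_k -> nat) (P : klp k n).

Definition lconstr (l : 'I_k) (x : vars R n) : Prop :=
  forall r : 'I_(m P l),
    ratr (b P l r 0) <= (\sum_(i < k) map_mx ratr (A P l i) *m x i) r 0.

Definition lobj (l : 'I_k) (x : vars R n) : R :=
  \sum_(i < k | (l <= i)%N) ((map_mx ratr (c P l i))^T *m x i) 0 0.

(* pfeas fuel l x : x is feasible for the problem of player l given the
   prefix (x_i)_{i<l} of x.  The fuel argument only serves to make the
   recursion over levels l, l+1, ..., k-1 structural; it is used with
   fuel = k, which is always enough.  The condition on player l+1 says that
   (x_{l+1},...,x_k) is an optimal solution of player l+1's problem given
   x_1..x_l (optimistic setting): it is feasible for it and its objective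
   value is <= that of every feasible point with the same prefix. *)
Fixpoint pfeas (fuel l : nat) (x : vars R n) : Prop :=
  match fuel with
  | 0 => True
  | f.+1 =>
    match (insub l : option 'I_k) with
    | None => True
    | Some l' =>
      lconstr l' x /\
      match (insub l.+1 : option 'I_k) with
      | None => True
      | Some l'' =>
        pfeas f l.+1 x /\
        forall y : vars R n,
          (forall i : 'I_k, (i <= l)%N -> y i = x i) ->
          pfeas f l.+1 y -> lobj l'' x <= lobj l'' y
      end
    end
  end.

Definition klp_feasible (x : vars R n) : Prop := pfeas k 0 x.

End KLevel.

(* Main.v *)
Require Import Defs.
From HB Require Import structures.
From mathcomp Require Import all_boot all_order all_algebra.
From mathcomp Require Import reals.
Import Order.TTheory GRing.Theory Num.Theory.
Local Open Scope ring_scope.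

Definition lcn {R : realType} {k} {n : 'I_k -> nat} {q} (bb : 'cV[rat]_q)
  (M : forall i, 'M[rat]_(q, n i)) (x : vars R n) : Prop :=
  forall r : 'I_q, ratr (bb r 0) <= (\sum_(i<k) map_mx ratr (M i) *m x i) r 0.

Lemma lcn_col (R : realType) k (n : 'I_k -> nat) q1 q2 (b1 : 'cV[rat]_q1) (b2 : 'cV[rat]_q2)
  (A1 : forall i, 'M[rat]_(q1, n i)) (A2 : forall i, 'M[rat]_(q2, n i)) (x : vars R n) :
  lcn (col_mx b1 b2) (fun i => col_mx (A1 i) (A2 i)) x <-> lcn b1 A1 x /\ lcn b2 A2 x.
Proof.
have key : (\sum_(i<k) map_mx ratr (col_mx (A1 i) (A2 i)) *m x i) =
  col_mx (\sum_(i<k) map_mx ratr (A1 i) *m x i) (\sum_(i<k) map_mx ratr (A2 i) *m x i) :> 'cV[R]_(q1+q2).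
  transitivity (\sum_(i<k) col_mx (map_mx ratr (A1 i) *m x i) (map_mx ratr (A2 i) *m x i)).
    by apply: eq_bigr => i _; rewrite map_col_mx mul_col_mx.
  apply: (big_rec3 (fun a b c => a = col_mx b c)) => [|i a b' c' _ ->].
    by rewrite col_mx0.
  by rewrite add_col_mx.
rewrite /lcn key; split.
  by move=> H; split=> r; [move: (H (lshift q2 r)) | move: (H (rshift q1 r))];
    rewrite ?col_mxEu ?col_mxEd.
case=> H1 H2 r; rewrite -(splitK r); case: (split r) => j /=.
  by rewrite !col_mxEu.
by rewrite !col_mxEd.
Qed.

Lemma lcn_cast (R : realType) k (n : 'I_k -> nat) q q' (e : q = q') (bb : 'cV[rat]_q)
  (M : forall i, 'M[rat]_(q, n i)) (x : vars R n) :
  lcn (castmx (e, erefl) bb) (fun i => castmx (e, erefl) (M i)) x <-> lcn bb M x.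
Proof. by case: q' / e; rewrite /lcn; under eq_bigr do rewrite castmx_id; under [castmx _ _]castmx_id. Qed.

Lemma lcn_ext (R : realType) k (n : 'I_k -> nat) q (bb : 'cV[rat]_q)
  (M M' : forall i, 'M[rat]_(q, n i)) (x : vars R n) :
  (forall i, M i = M' i) -> lcn bb M x <-> lcn bb M' x.
Proof. by move=> e; rewrite /lcn; under eq_bigr do rewrite e. Qed.

Lemma lcn_eq (R : realType) k (n : 'I_k -> nat) q (bb bb' : 'cV[rat]_q)
  (M M' : forall i, 'M[rat]_(q, n i)) (x : vars R n) :
  bb = bb' -> (forall i, M i = M' i) -> lcn bb M x <-> lcn bb' M' x.
Proof. by move=> -> e; rewrite /lcn; under eq_bigr do rewrite e. Qed.

Theorem lemma3p3 (R : realType) (k : nat) (n : 'I_k -> nat)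
  (P Ph : klp k n) (p p1 : 'I_k) (hp1 : nat_of_ord p1 = (nat_of_ord p).+1)
  (m1 m2 : nat)
  (A1 : forall i : 'I_k, 'M[rat]_(m1, n i))
  (A2 : forall i : 'I_k, 'M[rat]_(m2, n i))
  (b1 : 'cV[rat]_m1) (b2 : 'cV[rat]_m2)
  (* splitting of level p of (A,b,c) *)
  (hm : m P p = (m1 + m2)%N)
  (hA : forall i, A P p i = castmx (esym hm, erefl) (col_mx (A1 i) (A2 i)))
  (hb : b P p = castmx (esym hm, erefl) (col_mx b1 b2))
  (hA1 : forall i : 'I_k, (p < i)%N -> A1 i = 0)
  (* definition of (Ah, bh, ch) *)
  (hc : c Ph = c P)
  (hml : forall l : 'I_k, l != p -> l != p1 -> m Ph l = m P l)
  (hAl : forall (l : 'I_k) (h1 : l != p) (h2 : l != p1) (i : 'I_k),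
     A Ph l i = castmx (esym (hml l h1 h2), erefl) (A P l i))
  (hbl : forall (l : 'I_k) (h1 : l != p) (h2 : l != p1),
     b Ph l = castmx (esym (hml l h1 h2), erefl) (b P l))
  (hmp : m Ph p = m2)
  (hAp : forall i, A Ph p i = castmx (esym hmp, erefl) (A2 i))
  (hbp : b Ph p = castmx (esym hmp, erefl) b2)
  (hmp1 : m Ph p1 = (m1 + m P p1)%N)
  (hAp1 : forall i, A Ph p1 i = castmx (esym hmp1, erefl) (col_mx (A1 i) (A P p1 i)))
  (hbp1 : b Ph p1 = castmx (esym hmp1, erefl) (col_mx b1 (b P p1))) :
  forall x : vars R n, klp_feasible P x <-> klp_feasible Ph x.
Proof.
have Cp : forall x : vars R n, lconstr P p x <-> lcn b1 A1 x /\ lcn b2 A2 x.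
  move=> x; apply: iff_trans; last exact: (@lcn_col R k n _ _ b1 b2 A1 A2 x).
  apply: iff_trans; last exact: (@lcn_cast R k n _ _ (esym hm) _ _ x).
  exact: (@lcn_eq _ _ _ _ _ _ _ _ _ hb hA).
have Cph : forall x : vars R n, lconstr Ph p x <-> lcn b2 A2 x.
  move=> x; apply: iff_trans; last exact: (@lcn_cast R k n _ _ (esym hmp) _ _ x).
  exact: (@lcn_eq _ _ _ _ _ _ _ _ _ hbp hAp).
have Cp1 : forall x : vars R n, lconstr Ph p1 x <-> lcn b1 A1 x /\ lconstr P p1 x.
  move=> x; apply: iff_trans; last exact: (@lcn_col R k n _ _ b1 (b P p1) A1 (A P p1) x).
  apply: iff_trans; last exact: (@lcn_cast R k n _ _ (esym hmp1) _ _ x).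
  exact: (@lcn_eq _ _ _ _ _ _ _ _ _ hbp1 hAp1).
have Cl : forall (l : 'I_k) (x : vars R n), l != p -> l != p1 ->
    (lconstr Ph l x <-> lconstr P l x).
  move=> l x h1 h2; apply: iff_trans; last exact: (@lcn_cast R k n _ _ (esym (hml l h1 h2)) (b P l) (A P l) x).
  exact: (@lcn_eq _ _ _ _ _ _ _ _ _ (hbl l h1 h2) (hAl l h1 h2)).
have Cpre : forall x y : vars R n, (forall i : 'I_k, (i <= p)%N -> y i = x i) ->
    (lcn b1 A1 y <-> lcn b1 A1 x).
  move=> x y hxy; rewrite /lcn.
  have -> : (\sum_(i<k) map_mx ratr (A1 i) *m y i) = (\sum_(i<k) map_mx ratr (A1 i) *m x i).
    apply: eq_bigr => i _; case: (leqP i p) => hi; first by rewrite hxy.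
    by rewrite hA1 // map_mx0 !mul0mx.
  by [].
have Obj : forall l x, lobj Ph l x = lobj P l x by move=> l x; rewrite /lobj hc.
have main : forall f l (x : vars R n), (l + f = k)%N ->
  if l == p1 :> nat then (pfeas Ph f l x <-> lcn b1 A1 x /\ pfeas P f l x)
  else (pfeas Ph f l x <-> pfeas P f l x).
  elim=> [|f IH] l x Hlf.
    rewrite addn0 in Hlf; subst l.
    by rewrite ifN ?gtn_eqF.
  have hl : (l < k)%N by rewrite -Hlf addnS ltnS leq_addr.
  rewrite /= (insubT (fun j => j < k)%N hl).
  set L : 'I_k := Sub l hl.
  have hL : nat_of_ord L = l by [].
  have Np1p : nat_of_ord p1 != p by rewrite hp1 neq_ltn ltnSn orbT.
  case: (ltnP l.+1 k) => hl2; last first.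
    rewrite insubF; last by rewrite ltnNge hl2.
    have Nlp : L != p.
      apply/eqP => E; move: hl2; rewrite -hL E -hp1 leqNgt ltn_ord //.
    case: (eqVneq L p1) => [E1|N1].
      rewrite -hL E1 eqxx Cp1; tauto.
    rewrite ifN; last by rewrite -hL; apply/eqP => /val_inj; apply/eqP.
    rewrite (Cl L x Nlp N1); tauto.
  rewrite (insubT (fun j => j < k)%N hl2).
  set L2 : 'I_k := Sub l.+1 hl2.
  have hL2 : nat_of_ord L2 = l.+1 by [].
  have IHy : forall y : vars R n, if l.+1 == p1 :> nat then (pfeas Ph f l.+1 y <-> lcn b1 A1 y /\ pfeas P f l.+1 y)
    else (pfeas Ph f l.+1 y <-> pfeas P f l.+1 y).
    by move=> y; apply: IH; rewrite addSnnS.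
  case: (eqVneq L p1) => [E1|N1].
    have lE : l = p1 by rewrite -hL E1.
    have Nl1 : (l.+1 == p1 :> nat) = false by rewrite lE; apply/negbTE; rewrite neq_ltn ltnSn orbT.
    rewrite Nl1 in IHy.
    have -> : (l == p1 :> nat) = true by rewrite lE eqxx.
    rewrite E1 Cp1.
    split.
      move=> [[C1x Cx] [Fx Hy]]; split=> //; split=> //; split; first by apply/IHy.
      by move=> y Ey /IHy Fy; rewrite -!Obj; apply: Hy.
    move=> [C1x [Cx [Fx Hy]]]; split=> //; split; first by apply/IHy.
    by move=> y Ey /IHy Fy; rewrite !Obj; apply: Hy.
  rewrite ifN; last by rewrite -hL; apply/eqP => /val_inj; apply/eqP.
  case: (eqVneq L p) => [E0|N0].
    have lE : l = p by rewrite -hL E0.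
    have El1 : (l.+1 == p1 :> nat) by rewrite lE hp1.
    rewrite El1 in IHy.
    rewrite E0 Cp Cph.
    split.
      move=> [C2x [Fx Hy]]; have [C1x Fx'] := (IHy x).1 Fx.
      split=> //; split=> //.
      move=> y Ey Fy; rewrite -!Obj; apply: Hy => //; apply/IHy; split=> //.
      by apply/(Cpre x y) => // i; rewrite -lE; apply: Ey.
    move=> [[C1x C2x] [Fx Hy]]; split=> //; split; first by apply/IHy.
    move=> y Ey /IHy [_ Fy]; rewrite !Obj; exact: Hy.
  have Nl1 : (l.+1 == p1 :> nat) = false.
    by rewrite hp1 eqSS; apply/eqP => E; move/eqP: N0; apply; apply: val_inj.
  rewrite Nl1 in IHy.
  rewrite (Cl L x N0 N1).
  split.
    move=> [Cx [Fx Hy]]; split=> //; split; first by apply/IHy.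
    by move=> y Ey /IHy Fy; rewrite -!Obj; apply: Hy.
  move=> [Cx [Fx Hy]]; split=> //; split; first by apply/IHy.
  by move=> y Ey /IHy Fy; rewrite !Obj; apply: Hy.
move=> x; have := main k 0 x erefl.
rewrite ifN; first by move=> H; split=> /H.
by rewrite eq_sym neq_ltn hp1 ltn0Sn.
Qed.
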